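(* Fix $k,s\in\mathbb{N}$ and let $\omega=\omega(n)\to\infty$ as $n\to\infty$. (i) If $\alpha=\alpha(n)$ is bounded away from $0$, then $\lim_{n\to\infty}P\bigl(|(D_{n,1}^{\alpha})^s+\cdots+(D_{n,n}^{\alpha})^s-\mu_{s,\alpha}n|<\omega\sqrt{n}\bigr)=1$. (ii) $\lim_{n\to\infty}P\bigl(|(D_{n,1}^{\infty})^s+\cdots+(D_{n,n}^{\infty})^s-\mu_{s,\infty}n|<\omega\sqrt{n}\bigr)=1$.
   Context: A $k$-out map on $[n]$ is a map $M:[n]\to[n]^k$; the in-degree of vertex $j$ is the total number of coordinates, over all vertices and all $k$ labels, of the images equal to $j$. For $\alpha\in(0,\infty)$ the random $k$-out map $M_{n,k}^{\alpha}$ has law $P(M_{n,k}^{\alpha}=M)=\prod_{j=1}^n \alpha^{\overline{d_j}}/(\alpha n)^{\overline{kn}}$, with $(d_1,\dots,d_n)$ the in-degree sequence of $M$ and $x^{\overline{y}}=x(x+1)\cdots(x+y-1)$; $M_{n,k}^{\infty}$ is the uniformly random $k$-out map on $[n]$. $(D_{n,1}^{\alpha},\dots,D_{n,n}^{\alpha})$ and $(D_{n,1}^{\infty},\dots,D_{n,n}^{\infty})$ are their in-degree sequences, and $\mu_{s,\alpha}=\mathbb{E}[(D_{n,j}^{\alpha})^s]$, $\mu_{s,\infty}=\mathbb{E}[(D_{n,j}^{\infty})^s]$ (independent of $j$). *)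

(* Defs.v *)
From HB Require Import structures.
From mathcomp Require Import all_boot all_order all_algebra.
From mathcomp Require Import all_classical all_reals all_analysis.
Set Implicit Arguments. Unset Strict Implicit. Unset Printing Implicit Defensive.
Import Order.TTheory GRing.Theory Num.Theory.
Local Open Scope ring_scope.

Definition kout_map (n k : nat) := {ffun 'I_n -> k.-tuple 'I_n}.

Definition indeg (n k : nat) (M : kout_map n k) (j : 'I_n) : nat :=
  (\sum_(i < n) count_mem j (M i))%N.

Definition rising (R : ringType) (x : R) (y : nat) : R :=
  \prod_(i < y) (x + i%:R).

Definition law_alpha (R : realFieldType) (n k : nat) (alpha : R)
    (M : kout_map n k) : R :=
  (\prod_(j < n) rising alpha (indeg M j)) / rising (alpha * n%:R) (k * n).

(* law of M_{n,k}^oo : uniform on k-out maps *)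
Definition law_unif (R : realFieldType) (n k : nat) (M : kout_map n k) : R :=
  1 / (#|{: kout_map n k}|)%:R.

Definition prob (R : realFieldType) (n k : nat) (law : kout_map n k -> R)
    (E : pred (kout_map n k)) : R :=
  \sum_(M : kout_map n k | E M) law M.

Definition expect (R : realFieldType) (n k : nat) (law : kout_map n k -> R)
    (X : kout_map n k -> R) : R :=
  \sum_(M : kout_map n k) law M * X M.

(* mu_s = E[(D_{n,1})^s] (taken at the first vertex; 0 when n = 0) *)
Definition mu_moment (R : realFieldType) (n k s : nat)
    (law : kout_map n k -> R) : R :=
  match n return (kout_map n k -> R) -> R with
  | 0 => fun _ => 0
  | n'.+1 => fun law =>
      expect law (fun M => ((indeg M (ord0 : 'I_n'.+1)) ^ s)%:R)
  end law.

Definition power_sum (R : ringType) (n k s : nat) (M : kout_map n k) : R :=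
  \sum_(j < n) ((indeg M j) ^ s)%:R.

Definition conc_event (R : realType) (n k s : nat) (mu w : R) :
    pred (kout_map n k) :=
  fun M => `|power_sum R s M - mu * n%:R| < w * Num.sqrt (n%:R).

Arguments law_alpha {R} n k alpha M.
Arguments law_unif {R} n k M.
Arguments prob {R n k} law E.
Arguments mu_moment {R n k} s law.
Arguments conc_event {R n k} s mu w M.

(* Main.v *)
Require Import Defs.
From HB Require Import structures.
From mathcomp Require Import all_boot all_order all_algebra.
From mathcomp Require all_classical all_reals all_analysis.
From mathcomp Require Import zify ring lra.
Import Order.TTheory GRing.Theory Num.Theory.
Set Implicit Arguments. Unset Strict Implicit. Unset Printing Implicit Defensive.

Module KG.
Local Open Scope ring_scope.

Section Rise.
Variables (R : realFieldType) (beta : R).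
Definition rise (x : R) (m : nat) : R := \prod_(i < m) (x + beta * i%:R).

Lemma rise0 x : rise x 0 = 1.
Proof. by rewrite /rise big_ord0. Qed.

Lemma riseSr x m : rise x m.+1 = rise x m * (x + beta * m%:R).
Proof. by rewrite /rise big_ord_recr. Qed.

Lemma riseSl x m : rise x m.+1 = x * rise (x + beta) m.
Proof.
rewrite /rise big_ord_recl mulr0 addr0; congr (_ * _).
apply: eq_bigr => i _; rewrite lift0 /= -addn1 natrD mulrDr mulr1 addrAC addrA.
by rewrite addrAC.
Qed.

Lemma rise_add x a b : rise x (a + b) = rise x a * rise (x + beta * a%:R) b.
Proof.
rewrite /rise big_split_ord /=; congr (_ * _).
by apply: eq_bigr => i _; rewrite natrD mulrDr addrA.
Qed.

Hypothesis beta_ge0 : 0 <= beta.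

Lemma rise_ge0 x m : 0 <= x -> 0 <= rise x m.
Proof.
move=> x0; apply: prodr_ge0 => i _; apply: addr_ge0 => //.
by apply: mulr_ge0.
Qed.

Lemma rise_gt0 x m : 0 < x -> 0 < rise x m.
Proof.
move=> x0; apply: prodr_gt0 => i _; apply: ltr_wpDr => //.
by apply: mulr_ge0.
Qed.

Lemma rise_le x y m : 0 <= x -> x <= y -> rise x m <= rise y m.
Proof.
move=> x0 xy; apply: ler_prod => i _; apply/andP; split.
  by apply: addr_ge0 => //; apply: mulr_ge0.
by rewrite lerD2r.
Qed.
End Rise.

Section Gen.
Variables (R : realFieldType) (P : finType) (n : nat) (alpha beta : R).
Hypotheses (alpha_gt0 : 0 < alpha) (beta_ge0 : 0 <= beta).

Definition cnt (g : {ffun P -> 'I_n}) (S : {set P}) (j : 'I_n) : nat :=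
  (\sum_(p in S) (g p == j))%N.
Definition Wt S g := \prod_(j < n) rise beta alpha (cnt g S j).
Definition AA := alpha * n%:R.

Lemma sum_cnt h S : (\sum_(j < n) cnt h S j)%N = #|S|.
Proof.
rewrite /cnt exchange_big /= -sum1_card; apply: eq_bigr => p _.
rewrite (bigD1 (h p)) //= eqxx big1 ?addn0 // => j /negbTE.
by rewrite eq_sym => ->.
Qed.

Lemma marg m : forall S (h : {ffun P -> 'I_n}), #|~: S| = m ->
  \sum_(g : {ffun P -> 'I_n} | [forall p in S, g p == h p]) Wt setT g =
  Wt S h * rise beta (AA + beta * #|S|%:R) (#|P| - #|S|).
Proof.
elim: m => [|m IH] S h.
  move=> /card0_eq H.
  have -> : S = setT.
    apply/setP => p; have := H p; rewrite !inE.
    by case: (p \in S).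
  rewrite cardsT subnn rise0 mulr1.
  rewrite (big_pred1 h) // => g /=.
  apply/forall_inP/eqP => [Hg|->]; last by [].
  by apply/ffunP => p; apply/eqP; apply: Hg; rewrite inE.
move=> HS.
have : (0 < #|~: S|)%N by rewrite HS.
case/card_gt0P => p0; rewrite inE => p0S.
set S' := p0 |: S.
have cS' : #|S'| = #|S|.+1 by rewrite cardsU1 p0S.
have HS' : #|~: S'| = m.
  have := cardsC S'; have := cardsC S; rewrite cS' HS; lia.
rewrite (partition_big (fun g : {ffun P -> 'I_n} => g p0) xpredT) //=.
pose hv (v : 'I_n) := [ffun p => if p == p0 then v else h p].
have cnt_hv v j : cnt (hv v) S' j = (cnt h S j + (v == j))%N.
  rewrite /cnt big_setU1 //= ffunE eqxx addnC; congr (_ + _)%N.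
  apply: eq_bigr => p pS; rewrite ffunE; case: (p =P p0) => // E.
  by move: pS; rewrite E (negbTE p0S).
transitivity (\sum_(v < n) Wt S' (hv v) * rise beta (AA + beta * #|S'|%:R) (#|P| - #|S'|)).
  apply: eq_bigr => v _; rewrite -IH //; apply: eq_bigl => g.
  apply/andP/forall_inP => [[/forall_inP Hg /eqP Hv] p|Hg].
    rewrite !inE ffunE; case: (p =P p0) => [->|_] /=; first by rewrite Hv.
    exact: Hg.
  split.
    apply/forall_inP => p pS; have := Hg p; rewrite !inE pS orbT ffunE => /(_ isT).
    by case: (p =P p0) => // E; move: pS; rewrite E (negbTE p0S).
  by have := Hg p0; rewrite !inE ffunE !eqxx /= => /(_ isT).
have WS v : Wt S' (hv v) = Wt S h * (alpha + beta * (cnt h S v)%:R).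
  rewrite /Wt (bigD1 v) //= [in RHS](bigD1 v) //= cnt_hv eqxx addn1 riseSr.
  rewrite (eq_bigr (fun j => rise beta alpha (cnt h S j))); last first.
    by move=> j jv; rewrite cnt_hv eq_sym (negbTE jv) addn0.
  by rewrite mulrAC.
under eq_bigr do rewrite WS.
rewrite -big_distrl /= -big_distrr /= big_split /= sumr_const card_ord.
rewrite -mulr_sumr -natr_sum sum_cnt.
have lt : (#|S| < #|P|)%N.
  by rewrite -cS' max_card.
rewrite cS' -mulrA; congr (_ * _).
have -> : (#|P| - #|S|)%N = (#|P| - #|S|.+1).+1 by lia.
rewrite riseSl /AA; congr (_ * _); first by rewrite -[alpha *+ n]mulr_natr.
by rewrite -[(#|S|.+1)%:R]natr1 mulrDr mulr1 addrA.
Qed.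

Hypothesis n_gt0 : (0 < n)%N.

Definition ZZ := rise beta AA #|P|.
Definition L g := Wt setT g / ZZ.
Definition Q m := rise beta alpha m / rise beta AA m.
Definition D (g : {ffun P -> 'I_n}) j := cnt g setT j.
Fixpoint I a (S : {set P}) : R :=
  match a with 0 => Q #|S| | a'.+1 => \sum_p I a' (p |: S) end.

Lemma AA_gt0 : 0 < AA.
Proof. by rewrite /AA mulr_gt0 // ltr0n. Qed.

Lemma Wt_ge0 S g : 0 <= Wt S g.
Proof. by apply: prodr_ge0 => j _; apply: rise_ge0 => //; apply: ltW. Qed.

Lemma ZZ_gt0 : 0 < ZZ.
Proof. by apply: rise_gt0 => //; apply: AA_gt0. Qed.

Lemma L_ge0 g : 0 <= L g.
Proof. by rewrite /L divr_ge0 ?Wt_ge0 // ltW // ZZ_gt0. Qed.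

Lemma Q_ge0 m : 0 <= Q m.
Proof.
by rewrite /Q divr_ge0 // rise_ge0 // ltW // AA_gt0.
Qed.

Lemma sum_ind (S : {set P}) (h : {ffun P -> 'I_n}) :
  \sum_g L g * ([forall p in S, g p == h p] : nat)%:R = Wt S h / rise beta AA #|S|.
Proof.
rewrite (bigID (fun g : {ffun P -> 'I_n} => [forall p in S, g p == h p])) /=.
rewrite [X in _ + X]big1 ?addr0; last by move=> g /negbTE ->; rewrite mulr0.
rewrite (eq_bigr (fun g => L g)); last by move=> g ->; rewrite mulr1.
rewrite -mulr_suml (@marg _ S h (erefl _)).
rewrite /ZZ -{2}(subnKC (max_card (mem S))) rise_add.
have r1 : 0 < rise beta AA #|S| by apply: rise_gt0 => //; apply: AA_gt0.
have r2 : 0 < rise beta (AA + beta * #|S|%:R) (#|P| - #|S|).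
  by apply: rise_gt0 => //; rewrite ltr_wpDr ?AA_gt0 // mulr_ge0.
by field; apply/andP; split; rewrite gt_eqF.
Qed.

Lemma Wt_const (S : {set P}) (j : 'I_n) : Wt S [ffun => j] = rise beta alpha #|S|.
Proof.
rewrite /Wt (bigD1 j) //= big1 ?mulr1.
  rewrite /cnt (eq_bigr (fun=> 1%N)) ?sum1_card // => p _.
  by rewrite ffunE eqxx.
move=> i ij; rewrite /cnt big1 ?rise0 // => p _; rewrite ffunE.
by rewrite eq_sym (negbTE ij).
Qed.

Lemma E0 (S : {set P}) (j : 'I_n) :
  \sum_g L g * ([forall p in S, g p == j] : nat)%:R = Q #|S|.
Proof.
rewrite /Q -(Wt_const S j) -sum_ind; apply: eq_bigr => g _.
congr (_ * (nat_of_bool _)%:R); apply: eq_forallb => p.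
by rewrite ffunE.
Qed.

Lemma Dpow_ind (g : {ffun P -> 'I_n}) (j : 'I_n) a (S : {set P}) :
  (D g j ^ a.+1 * [forall p in S, g p == j])%N =
  (\sum_p (D g j ^ a * [forall q in p |: S, g q == j]))%N.
Proof.
rewrite expnSr -mulnA {2}/D /cnt.
rewrite (eq_bigl (fun p => true)); last by move=> p; rewrite inE.
rewrite big_distrl big_distrr /=; apply: eq_bigr => p _.
congr (_ * _)%N; rewrite mulnb; congr nat_of_bool.
apply/andP/forall_inP => [[/eqP gp /forall_inP H] q|H].
  by case/setU1P => [->|/H]; rewrite ?gp.
split; first by apply: H; rewrite !inE eqxx.
by apply/forall_inP => q qS; apply: H; rewrite inE qS orbT.
Qed.

Lemma E1 a : forall (S : {set P}) (j : 'I_n),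
  \sum_g L g * (D g j ^ a * [forall p in S, g p == j])%:R = I a S.
Proof.
elim: a => [|a IH] S j /=.
  by rewrite -(E0 S j); apply: eq_bigr => g _; rewrite expn0 mul1n.
under eq_bigr do rewrite Dpow_ind natr_sum mulr_sumr.
rewrite exchange_big /=; apply: eq_bigr => p _; exact: IH.
Qed.

Lemma sum_disj (S T : {set P}) (F : P -> nat) : [disjoint S & T] ->
  (\sum_(p in S :|: T) F p = \sum_(p in S) F p + \sum_(p in T) F p)%N.
Proof.
move=> dST; rewrite (bigID (mem S)) /=; congr (_ + _)%N.
  by apply: eq_bigl => p; rewrite !inE; case: (p \in S); rewrite ?andbT ?andbF.
apply: eq_bigl => p; rewrite !inE.
case pS: (p \in S); case pT: (p \in T) => //=.
by rewrite (disjointFl dST pT) in pS.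
Qed.

Lemma base2 (S T : {set P}) (j1 j2 : 'I_n) : j1 != j2 ->
  \sum_g L g * ([forall p in S, g p == j1] * [forall p in T, g p == j2])%:R
  <= Q #|S| * Q #|T|.
Proof.
move=> j12.
case: (boolP [disjoint S & T]) => dST; last first.
  rewrite big1; first exact: mulr_ge0 (Q_ge0 _) (Q_ge0 _).
  move=> g _.
  case/pred0Pn: dST => p /andP [pS pT].
  case: (boolP [forall p in S, g p == j1]) => [/forall_inP H1|_]; last by rewrite /= mul0n mulr0.
  case: (boolP [forall p in T, g p == j2]) => [/forall_inP H2|_]; last by rewrite /= muln0 mulr0.
  by move: (H1 _ pS) (H2 _ pT) j12 => /eqP -> /eqP ->; rewrite eqxx.
pose h := [ffun p => if p \in S then j1 else j2].
have -> : \sum_g L g * ([forall p in S, g p == j1] * [forall p in T, g p == j2])%:R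
  = \sum_g L g * ([forall p in S :|: T, g p == h p] : nat)%:R.
  apply: eq_bigr => g _; congr (_ * _%:R); rewrite mulnb; congr nat_of_bool.
  apply/andP/forall_inP => [[/forall_inP H1 /forall_inP H2] p|H].
    rewrite inE ffunE; case/orP => [pS|pT]; first by rewrite pS H1.
    by rewrite (disjointFl dST pT) H2.
  split; apply/forall_inP => p pX.
    by have := H p; rewrite inE pX ffunE pX /= => /(_ isT).
  by have := H p; rewrite inE pX orbT ffunE (disjointFl dST pX) /= => /(_ isT).
rewrite sum_ind.
have cST : #|S :|: T| = (#|S| + #|T|)%N.
  by rewrite cardsU (disjoint_setI0 dST) cards0 subn0.
have cntj j : cnt h (S :|: T) j = (#|S| * (j1 == j) + #|T| * (j2 == j))%N.
  rewrite /cnt sum_disj //; congr (_ + _)%N.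
    rewrite -sum_nat_const; apply: eq_bigr => p pS; by rewrite ffunE pS.
  rewrite -sum_nat_const; apply: eq_bigr => p pT; by rewrite ffunE (disjointFl dST pT).
have -> : Wt (S :|: T) h = rise beta alpha #|S| * rise beta alpha #|T|.
  rewrite /Wt (bigD1 j1) //= (bigD1 j2) /=; last by rewrite eq_sym.
  rewrite big1; last first.
    move=> j /andP [jj1 jj2]; rewrite cntj (eq_sym j1) (negbTE jj1) (eq_sym j2) (negbTE jj2).
    by rewrite !muln0 rise0.
  rewrite mulr1 !cntj eqxx (negbTE j12) eq_sym (negbTE j12) eqxx.
  by rewrite !muln0 !muln1 ?addn0 ?add0n.
rewrite cST rise_add /Q.
set a := rise beta alpha #|S|; set b := rise beta alpha #|T|.
set x := rise beta AA #|S|; set y := rise beta AA #|T|.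
set y' := rise beta (AA + beta * #|S|%:R) #|T|.
have a0 : 0 <= a by apply: rise_ge0 => //; apply: ltW.
have b0 : 0 <= b by apply: rise_ge0 => //; apply: ltW.
have x0 : 0 < x by apply: rise_gt0 => //; apply: AA_gt0.
have y0 : 0 < y by apply: rise_gt0 => //; apply: AA_gt0.
have yy : y <= y'.
  apply: rise_le => //; first by apply: ltW; apply: AA_gt0.
  by rewrite lerDl mulr_ge0.
have y'0 : 0 < y' by apply: lt_le_trans yy.
rewrite mulf_div; apply: ler_wpM2l; first exact: mulr_ge0.
by rewrite lef_pV2 ?posrE ?mulr_gt0 // ler_pM2l.
Qed.


Lemma E2 (j1 j2 : 'I_n) (j12 : j1 != j2) a b : forall (S T : {set P}),
  \sum_g L g * ((D g j1 ^ a * [forall p in S, g p == j1]) *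
                (D g j2 ^ b * [forall p in T, g p == j2]))%:R
  <= I a S * I b T.
Proof.
elim: a => [|a IHa] S T.
  elim: b T => [|b IHb] T /=.
    under eq_bigr do rewrite !expn0 !mul1n.
    exact: base2.
  under eq_bigr do rewrite Dpow_ind big_distrr natr_sum mulr_sumr /=.
  rewrite exchange_big /= mulr_sumr; apply: ler_sum => p _; exact: IHb.
under eq_bigr do rewrite Dpow_ind big_distrl natr_sum mulr_sumr /=.
rewrite exchange_big /= mulr_suml; apply: ler_sum => p _; exact: IHa.
Qed.

Lemma Lsum : \sum_g L g = 1.
Proof.
have := E0 set0 (Ordinal n_gt0); rewrite cards0 /Q !rise0 divr1 => <-.
apply: eq_bigr => g _.
suff -> : [forall p in set0, g p == Ordinal n_gt0] by rewrite mulr1.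
by apply/forall_inP => p; rewrite inE.
Qed.

Variables (k : nat) (c : R).
Hypotheses (c_gt0 : 0 < c) (c_le : c <= alpha) (beta_le1 : beta <= 1)
  (cardP : #|P| = (k * n)%N).

Definition kc (m : nat) : R := k%:R * (1 + m%:R / c).
Fixpoint B a m : R :=
  match a with 0 => 1 | a'.+1 => m%:R * B a' m + kc m * B a' m.+1 end.

Lemma kc_ge0 m : 0 <= kc m.
Proof. by rewrite /kc mulr_ge0 // addr_ge0 // divr_ge0 // ltW. Qed.

Lemma B_ge0 a m : 0 <= B a m.
Proof.
elim: a m => [|a IH] m //=.
by rewrite addr_ge0 // mulr_ge0 // ?kc_ge0.
Qed.

Lemma Q_succ m : Q m.+1 = Q m * ((alpha + beta * m%:R) / (AA + beta * m%:R)).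
Proof.
rewrite /Q !riseSr.
have r1 : 0 < rise beta AA m by apply: rise_gt0 => //; apply: AA_gt0.
have r2 : 0 < AA + beta * m%:R by rewrite ltr_wpDr ?AA_gt0 // mulr_ge0.
by field; apply/andP; split; rewrite gt_eqF.
Qed.

Lemma ratio_le m :
  (#|P| - m)%:R * ((alpha + beta * m%:R) / (AA + beta * m%:R)) <= kc m.
Proof.
have num0 : 0 <= alpha + beta * m%:R by rewrite addr_ge0 ?mulr_ge0 // ltW.
have AA0 := AA_gt0.
have n0 : 0 < n%:R :> R by rewrite ltr0n.
apply: (@le_trans _ _ ((k * n)%:R * ((alpha + beta * m%:R) / AA))).
  apply: ler_pM.
  - by [].
  - apply: divr_ge0 => //; apply: addr_ge0; [exact: ltW | exact: mulr_ge0].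
  - by rewrite ler_nat cardP leq_subr.
  - apply: ler_wpM2l => //; rewrite lef_pV2 ?posrE ?ltr_wpDr ?mulr_ge0 //.
    by rewrite lerDl mulr_ge0.
have -> : (k * n)%:R * ((alpha + beta * m%:R) / AA) =
          k%:R * (1 + beta * m%:R / alpha).
  rewrite /AA natrM; field; apply/andP; split; rewrite gt_eqF //.
rewrite /kc; apply: ler_wpM2l => //; rewrite lerD2l.
apply: (@le_trans _ _ (m%:R / alpha)).
  apply: ler_wpM2r; first by rewrite invr_ge0 ltW.
  exact: ler_piMl (ler0n _ _) beta_le1.
by apply: ler_wpM2l => //; rewrite lef_pV2 ?posrE.
Qed.

Lemma I_bound a : forall S, I a S <= B a #|S| * Q #|S|.
Proof.
elim: a => [|a IH] S /=; first by rewrite mul1r.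
rewrite (bigID (mem S)) /=.
rewrite (eq_bigl (mem S)) //.
rewrite (eq_bigr (fun _ => I a S)); last first.
  move=> p pS; suff -> : p |: S = S by [].
  by apply/setUidPr; rewrite sub1set; exact: pS.
rewrite [X in _ + X](eq_bigl (mem (~: S))); last by move=> p; rewrite !inE.
rewrite sumr_const.
apply: (@le_trans _ _ (I a S *+ #|S| + (B a #|S|.+1 * Q #|S|.+1) *+ #|~: S|)).
  apply: lerD => //; rewrite -sumr_const; apply: ler_sum => p; rewrite inE => pS; move: pS; rewrite inE => pS.
  have -> : #|S|.+1 = #|p |: S| by rewrite cardsU1 pS.
  exact: IH.
have -> : #|~: S| = (#|P| - #|S|)%N by rewrite -(cardsC S) addKn.
rewrite mulrDl; apply: lerD.
  by rewrite -mulrA mulr_natl; apply: ler_wMn2r; exact: IH.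
rewrite Q_succ.
set r := (alpha + beta * #|S|%:R) / (AA + beta * #|S|%:R).
have -> : B a #|S|.+1 * (Q #|S| * r) *+ (#|P| - #|S|) =
  (B a #|S|.+1 * Q #|S|) * ((#|P| - #|S|)%:R * r) by rewrite -mulr_natr; ring.
have -> : kc #|S| * B a #|S|.+1 * Q #|S| = B a #|S|.+1 * Q #|S| * kc #|S| by ring.
apply: ler_wpM2l.
  by apply: mulr_ge0; [exact: B_ge0 | exact: Q_ge0].
exact: ratio_le.
Qed.

Variable s : nat.
Definition X (g : {ffun P -> 'I_n}) : R := \sum_(j < n) ((D g j) ^ s)%:R.
Definition mu := I s set0.

Lemma forall_set0 (g : {ffun P -> 'I_n}) j : [forall p in set0, g p == j].
Proof. by apply/forall_inP => p; rewrite inE. Qed.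

Lemma ED j : \sum_g L g * ((D g j) ^ s)%:R = mu.
Proof.
rewrite /mu -(E1 s set0 j); apply: eq_bigr => g _.
by rewrite forall_set0 muln1.
Qed.

Lemma EX : \sum_g L g * X g = n%:R * mu.
Proof.
under eq_bigr do rewrite /X mulr_sumr.
rewrite exchange_big /= (eq_bigr (fun _ => mu)) ?sumr_const ?card_ord ?mulr_natl //.
move=> j _; exact: ED.
Qed.

Lemma EDD j j' : j != j' ->
  \sum_g L g * ((D g j ^ s)%:R * (D g j' ^ s)%:R) <= mu * mu.
Proof.
move=> jj; have := E2 jj s s set0 set0.
rewrite (eq_bigr (fun g => L g * ((D g j ^ s)%:R * (D g j' ^ s)%:R))) //.
by move=> g _; rewrite !forall_set0 !muln1 natrM.
Qed.

Lemma EDj2 j : \sum_g L g * ((D g j ^ s)%:R * (D g j ^ s)%:R) <= B (s + s) 0.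
Proof.
have := I_bound (s + s) set0; rewrite cards0 /Q !rise0 divr1 mulr1.
apply: le_trans; rewrite -(E1 (s + s) set0 j) le_eqVlt; apply/orP; left.
apply/eqP; apply: eq_bigr => g _.
by rewrite forall_set0 muln1 -natrM expnD.
Qed.

Lemma var_bound : \sum_g L g * (X g - n%:R * mu) ^+ 2 <= n%:R * B (s + s) 0.
Proof.
have -> : \sum_g L g * (X g - n%:R * mu) ^+ 2 =
   \sum_g L g * (X g * X g) - 2%:R * (n%:R * mu) * \sum_g L g * X g
   + (n%:R * mu) ^+ 2 * \sum_g L g.
  rewrite [2%:R * _ * _]mulr_sumr [_ ^+ 2 * _]mulr_sumr -sumrN -!big_split /=.
  by apply: eq_bigr => g _; ring.
rewrite EX Lsum mulr1.
have EXX : \sum_g L g * (X g * X g) <= n%:R * (B (s + s) 0 + (n%:R - 1) * (mu * mu)).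
  have -> : \sum_g L g * (X g * X g) =
     \sum_(j < n) \sum_(j' < n) \sum_g L g * ((D g j ^ s)%:R * (D g j' ^ s)%:R).
    transitivity (\sum_g \sum_(j < n) \sum_(j' < n) L g * ((D g j ^ s)%:R * (D g j' ^ s)%:R)).
      apply: eq_bigr => g _; rewrite {1}/X mulr_suml mulr_sumr; apply: eq_bigr => j _.
      by rewrite /X mulr_sumr mulr_sumr.
    rewrite exchange_big; apply: eq_bigr => j _ /=; exact: exchange_big.
  rewrite -[n in n%:R * _]card_ord -sumr_const mulr_suml; apply: ler_sum => j _.
  rewrite (bigD1 j) //= mul1r; apply: lerD; first exact: EDj2.
  have -> : (n%:R - 1) * (mu * mu) = \sum_(j' < n | j' != j) (mu * mu).
    rewrite sumr_const -[RHS]mulr_natl; congr (_ * _).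
    have -> : #|(fun i : 'I_n => i != j)| = n.-1.
      by rewrite -[n in n.-1](card_ord n) -(cardC1 j); apply: eq_card.
    by rewrite -{1}(prednK n_gt0) -natr1 addrK.
  by apply: ler_sum => j' jj; apply: EDD; rewrite eq_sym.
have mu0 : 0 <= mu by apply: (le_trans _ (le_refl _)); rewrite -(ED (Ordinal n_gt0)); apply: sumr_ge0 => g _; rewrite mulr_ge0 ?L_ge0.
have : \sum_g L g * (X g * X g) - 2%:R * (n%:R * mu) * (n%:R * mu) + (n%:R * mu) ^+ 2
   <= n%:R * (B (s + s) 0 + (n%:R - 1) * (mu * mu)) - (n%:R * mu) ^+ 2.
  have -> : \sum_g L g * (X g * X g) - 2%:R * (n%:R * mu) * (n%:R * mu) + (n%:R * mu) ^+ 2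
     = \sum_g L g * (X g * X g) - (n%:R * mu) ^+ 2 by ring.
  by rewrite lerD2r.
move/le_trans; apply.
have -> : n%:R * (B (s + s) 0 + (n%:R - 1) * (mu * mu)) - (n%:R * mu) ^+ 2
   = n%:R * B (s + s) 0 - n%:R * (mu * mu) by ring.
by rewrite lerBlDr lerDl mulr_ge0 ?mulr_ge0.
Qed.

Lemma cheb t : 0 < t ->
  \sum_(g | t <= `|X g - n%:R * mu|) L g <= n%:R * B (s + s) 0 / t ^+ 2.
Proof.
move=> t0.
apply: (@le_trans _ _ (\sum_(g | t <= `|X g - n%:R * mu|) L g * ((X g - n%:R * mu) ^+ 2 / t ^+ 2))).
  apply: ler_sum => g Hg; rewrite ler_peMr ?L_ge0 //.
  rewrite ler_pdivlMr ?exprn_gt0 // mul1r -[(X g - _) ^+ 2]real_normK ?num_real //.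
  by rewrite !expr2; apply: ler_pM => //; apply: ltW.
apply: (@le_trans _ _ (\sum_g L g * ((X g - n%:R * mu) ^+ 2 / t ^+ 2))).
  rewrite [X in _ <= X](bigID (fun g => t <= `|X g - n%:R * mu|)) /= lerDl.
  by apply: sumr_ge0 => g _; rewrite mulr_ge0 ?L_ge0 // divr_ge0 ?sqr_ge0 ?exprn_ge0 ?ltW.
under eq_bigr do rewrite mulrA.
rewrite -mulr_suml; apply: ler_wpM2r; first by rewrite invr_ge0 exprn_ge0 // ltW.
exact: var_bound.
Qed.
End Gen.

End KG.
From mathcomp Require Import all_classical all_reals all_analysis.
Import Order.TTheory GRing.Theory Num.Theory.
Import numFieldNormedType.Exports.
Local Open Scope classical_set_scope.
Local Open Scope ring_scope.
Import KG.

Section Kout.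
Variables (n' k : nat).
Local Notation n := n'.+1.
Local Notation Pt := ('I_n * 'I_k)%type.

Definition psi (g : {ffun Pt -> 'I_n}) : kout_map n k :=
  [ffun i => [tuple g (i, l) | l < k]].
Definition phi (M : kout_map n k) : {ffun Pt -> 'I_n} :=
  [ffun p => tnth (M p.1) p.2].

Lemma psiK : cancel phi psi.
Proof.
move=> M; apply/ffunP => i; rewrite ffunE; apply: eq_from_tnth => l.
by rewrite tnth_mktuple ffunE.
Qed.

Lemma phiK : cancel psi phi.
Proof. by move=> g; apply/ffunP => -[i l]; rewrite !ffunE tnth_mktuple. Qed.

Lemma count_tuple (t : k.-tuple 'I_n) j :
  count_mem j t = (\sum_(l < k) (tnth t l == j))%N.
Proof.
rewrite -sum1_count -[in LHS](map_tnth_enum t) big_map big_mkcond /=.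
by rewrite big_enum.
Qed.

Lemma indeg_psi g j : indeg (psi g) j = D g j.
Proof.
rewrite /indeg /D /cnt (eq_bigl predT); last by move=> p; rewrite inE.
transitivity (\sum_(i < n) \sum_(l < k) ((g (i, l) == j) : nat))%N.
  apply: eq_bigr => i _; rewrite ffunE count_tuple.
  by apply: eq_bigr => l _; rewrite tnth_mktuple.
by rewrite pair_big; apply: eq_big => // -[i l].
Qed.

Lemma cardPt : #|{: Pt}| = (k * n)%N.
Proof. by rewrite card_prod !card_ord mulnC. Qed.

Lemma reindex_kout (R : realType) (F : kout_map n k -> R) (E : pred (kout_map n k)) :
  \sum_(M | E M) F M = \sum_(g | E (psi g)) F (psi g).
Proof. by rewrite (reindex psi) //; apply: onW_bij; exists phi; [exact: phiK | exact: psiK]. Qed.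

Lemma reindex_kout_all (R : realType) (F : kout_map n k -> R) :
  \sum_M F M = \sum_g F (psi g).
Proof. by rewrite (reindex psi) //; apply: onW_bij; exists phi; [exact: phiK | exact: psiK]. Qed.

Lemma conc_kout (R : realType) (s : nat) (law : kout_map n k -> R) (alpha beta c w : R) :
  0 < c -> c <= alpha -> 0 <= beta -> beta <= 1 -> 0 < w ->
  (forall g, law (psi g) = L alpha beta g) ->
  1 - B k c (s + s) 0 / w ^+ 2 <= prob law (conc_event s (mu_moment s law) w) <= 1.
Proof.
move=> c0 ca b0 b1 w0 Hlaw.
have a0 : 0 < alpha by apply: lt_le_trans ca.
have n0 : (0 < n)%N by [].
have Hmu : mu_moment s law = mu {: Pt} n alpha beta s.
  rewrite /mu_moment /expect reindex_kout_all -(ED {: Pt} a0 b0 n0 s ord0).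
  by apply: eq_bigr => g _; rewrite Hlaw indeg_psi.
set t := w * Num.sqrt n%:R.
have t0 : 0 < t by rewrite mulr_gt0 // sqrtr_gt0 ltr0n.
have Ev (g : {ffun Pt -> 'I_n}) : conc_event s (mu_moment s law) w (psi g) =
    (`|X R s g - n%:R * mu {: Pt} n alpha beta s| < t).
  rewrite /conc_event /power_sum Hmu mulrC /X; congr (`|_ - _| < _).
  by apply: eq_bigr => j _; rewrite indeg_psi.
have Hp : prob law (conc_event s (mu_moment s law) w) =
    \sum_(g : {ffun Pt -> 'I_n} | `|X R s g - n%:R * mu {: Pt} n alpha beta s| < t) L alpha beta g.
  rewrite /prob reindex_kout; apply: eq_big => g; first by rewrite Ev.
  by move=> _; rewrite Hlaw.
have Htot := Lsum {: Pt} a0 b0 n0.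
rewrite (bigID (fun g : {ffun Pt -> 'I_n} => `|X R s g - n%:R * mu {: Pt} n alpha beta s| < t)) /= in Htot.
have Hc := cheb a0 b0 n0 c0 ca b1 cardPt s t0.
rewrite [Y in _ + Y](eq_bigl (fun g : {ffun Pt -> 'I_n} => t <= `|X R s g - n%:R * mu {: Pt} n alpha beta s|)) in Htot; last first.
  by move=> g; rewrite /= -leNgt.
rewrite [Y in Y + _](eq_bigl (fun g : {ffun Pt -> 'I_n} => `|X R s g - n%:R * mu {: Pt} n alpha beta s| < t)) in Htot; last first.
  by move=> g.
have Ht : n%:R * B k c (s + s) 0 / t ^+ 2 = B k c (s + s) 0 / w ^+ 2.
  rewrite /t exprMn sqr_sqrtr ?ler0n //; field.
  by apply/andP; split; rewrite gt_eqF // ?exprn_gt0 ?ltr0n.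
rewrite Ht in Hc.
have Hc0 : 0 <= \sum_(g : {ffun Pt -> 'I_n} | t <= `|X R s g - n%:R * mu {: Pt} n alpha beta s|) L alpha beta g.
  by apply: sumr_ge0 => g _; apply: L_ge0.
set cm := \sum_(g : {ffun Pt -> 'I_n} | t <= `|X R s g - n%:R * mu {: Pt} n alpha beta s|) L alpha beta g.
set cp := \sum_(g : {ffun Pt -> 'I_n} | `|X R s g - n%:R * mu {: Pt} n alpha beta s| < t) L alpha beta g.
have -> : prob law (conc_event s (mu_moment s law) w) = 1 - cm.
  by rewrite Hp -/cp -Htot addrK.
apply/andP; split; first by apply: lerB.
by rewrite lerBlDr lerDl.
Qed.
End Kout.

Lemma lim1 (R : realType) (f omega : nat -> R) (C : R) : omega @ \oo --> +oo ->
  (forall n, (0 < n)%N -> 0 < omega n -> 1 - C / omega n ^+ 2 <= f n <= 1) ->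
  f @ \oo --> (1 : R).
Proof.
move=> /cvgryPge Hom Hf; apply/cvgrPdist_le => e e0.
near=> m.
have om : Num.max 1 (`|C| / e) <= omega m by near: m; apply: Hom.
have m0 : (0 < m)%N by near: m; apply: nbhs_infty_gt.
rewrite ge_max in om; case/andP: om => o1 oC.
have w0 : 0 < omega m by apply: lt_le_trans o1.
case/andP: (Hf m m0 w0) => H1 H2.
rewrite ger0_norm ?subr_ge0 //.
have H3 : 1 - f m <= C / omega m ^+ 2 by rewrite lerBlDr -lerBlDl.
apply: le_trans H3 _.
apply: (@le_trans _ _ (`|C| / omega m ^+ 2)).
  by apply: ler_wpM2r; [rewrite invr_ge0 exprn_ge0 // ltW | exact: ler_norm].
rewrite ler_pdivrMr ?exprn_gt0 //.
have aC : `|C| = e * (`|C| / e) by rewrite mulrC divfK // gt_eqF.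
rewrite aC.
have a0 : 0 <= `|C| / e by rewrite divr_ge0 // ltW.
apply: (@le_trans _ _ (e * omega m)); first by rewrite ler_pM2l.
rewrite expr2 mulrA; apply: ler_peMr => //; rewrite mulr_ge0 // ltW.
Unshelve. all: by end_near.
Qed.

Lemma rising_rise (R : realFieldType) (x : R) y : rising x y = rise 1 x y.
Proof. by apply: eq_bigr => i _; rewrite mul1r. Qed.

Lemma rise0_pow (R : realFieldType) (x : R) m : rise 0 x m = x ^+ m.
Proof.
rewrite /rise (eq_bigr (fun=> x)) ?prodr_const ?card_ord // => i _.
by rewrite mul0r addr0.
Qed.

Lemma law_alpha_psi (R : realType) n' k (a : R) g :
  law_alpha n'.+1 k a (psi g) = L a 1 g.
Proof.
rewrite /law_alpha /L /Wt /ZZ /AA cardPt rising_rise; congr (_ / _).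
by apply: eq_bigr => j _; rewrite indeg_psi rising_rise.
Qed.

Lemma law_unif_psi (R : realType) n' k g :
  @law_unif R n'.+1 k (psi g) = L 1 0 g.
Proof.
rewrite /law_unif /L /Wt /ZZ /AA cardPt rise0_pow mul1r.
rewrite big1 => [|j _]; last by rewrite rise0_pow expr1n.
rewrite /kout_map card_ffun card_tuple !card_ord -expnM mulnC natrX.
by rewrite !mul1r.
Qed.

Theorem corollary2 (R : realType) (k s : nat) (omega : nat -> R) :
  omega @ \oo --> +oo ->
  (forall alpha : nat -> R,
     (forall n, 0 < alpha n) ->
     (exists2 c : R, 0 < c & forall n, c <= alpha n) ->
     (fun n => prob (law_alpha n k (alpha n))
                 (conc_event s (mu_moment s (law_alpha n k (alpha n))) (omega n)))
       @ \oo --> (1 : R))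
  /\
  (fun n => prob (@law_unif R n k)
              (conc_event s (mu_moment s (@law_unif R n k)) (omega n)))
    @ \oo --> (1 : R).
Proof.
move=> Hom; split.
  move=> alpha Ha [c c0 Hc].
  apply: (@lim1 R _ omega (B k c (s + s) 0)) => // -[|n'] // _ w0.
  apply: (conc_kout s c0 (Hc _) ler01 (lexx _) w0).
  exact: law_alpha_psi.
apply: (@lim1 R _ omega (B k 1 (s + s) 0)) => // -[|n'] // _ w0.
apply: (conc_kout s ltr01 (lexx _) (lexx _) ler01 w0).
exact: law_unif_psi.
Qed.
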